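(* Let $\mathfrak g$ be a Lie algebra over a field $\mathbb k$ and $(X,\Delta,T)$ the associated TSD object obtained by composing the binary SD operation. For a Lie $2$-cochain $\phi$ define $\Theta^2(\phi)\colon X^{\otimes 3}\to X$ by $\Theta^2(\phi)((a,x)\otimes(b,y)\otimes(c,z))=\big(0,\ b\phi(x,z)+c\phi(x,y)+[\phi(x,y),z]+\phi([x,y],z)\big).$ Then $\Theta^2$ maps $Z^2_{\rm Lie}(\mathfrak g;\mathfrak g)$ into $Z^2_{\rm TSD}(X;X)$ and $B^2_{\rm Lie}(\mathfrak g;\mathfrak g)$ into $B^2_{\rm TSD}(X;X)$, and thus induces a homomorphism $H^2_{\rm Lie}(\mathfrak g;\mathfrak g)\to H^2_{\rm TSD}(X;X)$.
   Context: $X=\mathbb k\oplus\mathfrak g$, $\Delta(a,x)=(a,x)\otimes(1,0)+(1,0)\otimes(0,x)$, $\Delta_3=(\Delta\otimes\mathbb 1)\Delta$ (Sweedler $\Delta_3(w)=w^{(1)}\otimes w^{(2)}\otimes w^{(3)}$), $q((a,x)\otimes(b,y))=(ab,bx+[x,y])$, and $T=q\circ(q\otimes\mathbb 1)$, i.e. $T((a,x)\otimes(b,y)\otimes(c,z))=(abc,\ bcx+c[x,y]+b[x,z]+[[x,y],z])$. TSD cohomology: $\sigma\colon X^{\otimes 9}\to X^{\otimes 9}$ sends $u_1\otimes\cdots\otimes u_9$ to $u_1\otimes u_4\otimes u_7\otimes u_2\otimes u_5\otimes u_8\otimes u_3\otimes u_6\otimes u_9$. $C^1_{\rm TSD}$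 = linear $f$ with $\Delta_3 f=(f\otimes\mathbb 1\otimes\mathbb 1+\mathbb 1\otimes f\otimes\mathbb 1+\mathbb 1\otimes\mathbb 1\otimes f)\Delta_3$; $C^2_{\rm TSD}$ = linear $\psi\colon X^{\otimes 3}\to X$ with $\Delta_3\psi=(\psi\otimes T\otimes T+T\otimes\psi\otimes T+T\otimes T\otimes\psi)\sigma\Delta_3^{\otimes3}$; $\delta^1 f(x\otimes y\otimes z)=f(T(x\otimes y\otimes z))-T(f(x)\otimes y\otimes z)-T(x\otimes f(y)\otimes z)-T(x\otimes y\otimes f(z))$; $\delta^2\psi(x\otimes y\otimes z\otimes w\otimes u)=T(\psi(x\otimes y\otimes z)\otimes w\otimes u)+\psi(T(x\otimes y\otimes z)\otimes w\otimes u)-\psi(A_1\otimes A_2\otimes A_3)-T(\Psi_1\otimes A_2\otimes A_3)-T(A_1\otimes\Psi_2\otimes A_3)-T(A_1\otimes A_2\otimes\Psi_3)$, where $A_i=T(x_i\otimes w^{(i)}\otimes u^{(i)})$, $(x_1,x_2,x_3)=(x,y,z)$, $\Psi_i$ likewise with $\psi$; $Z^2_{\rm TSD}=C^2_{\rm TSD}\cap\ker\delta^2$, $B^2_{\rm TSD}=\delta^1(C^1_{\rm TSD})$, $H^2_{\rm TSD}=Z^2/B^2$. Lie cohomology: $2$-cochains are alternating bilinear $\phi\colon\mathfrak g\times\mathfrak g\to\mathfrak g$; $\delta^2\phi(x,y,z)=[\phi(x,y),z]+[\phi(y,z),x]+[\phi(z,x),y]+\phi([x,y],z)+\phi([y,z],x)+\phi([z,x],y)$;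 $\delta^1f(x,y)=f([x,y])-[f(x),y]-[x,f(y)]$; $H^2_{\rm Lie}=\ker\delta^2/\operatorname{im}\delta^1$. *)

(* Defs.v *)
From mathcomp Require Import all_boot all_order all_algebra.
Set Implicit Arguments. Unset Strict Implicit. Unset Printing Implicit Defensive.
Import GRing.Theory.
Local Open Scope ring_scope.

Section LieTSD.
Variable K : fieldType.
Variable g : lmodType K.
Variable br : g -> g -> g.

Definition linear_map (f : g -> g) : Prop :=
  forall (c : K) (x y : g), f (c *: x + y) = c *: f x + f y.

Definition bilinear_map (phi : g -> g -> g) : Prop :=
  (forall z, linear_map (fun x => phi x z)) /\ (forall x, linear_map (phi x)).

Definition is_lie_bracket : Prop :=
  [/\ bilinear_map br, (forall x, br x x = 0) &
      (forall x y z, br x (br y z) + br y (br z x) + br z (br x y) = 0)].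

Definition lie_cochain2 (phi : g -> g -> g) : Prop :=
  bilinear_map phi /\ (forall x, phi x x = 0).

Definition lie_d2 (phi : g -> g -> g) (x y z : g) : g :=
  br (phi x y) z + br (phi y z) x + br (phi z x) y
  + phi (br x y) z + phi (br y z) x + phi (br z x) y.

Definition lie_d1 (f : g -> g) (x y : g) : g :=
  f (br x y) - br (f x) y - br x (f y).

Definition lie_Z2 (phi : g -> g -> g) : Prop :=
  lie_cochain2 phi /\ (forall x y z, lie_d2 phi x y z = 0).

Definition lie_B2 (phi : g -> g -> g) : Prop :=
  exists f : g -> g, linear_map f /\ (forall x y, phi x y = lie_d1 f x y).

Definition X := (K * g)%type.
Definition Xadd (p q : X) : X := (p.1 + q.1, p.2 + q.2).
Definition Xsub (p q : X) : X := (p.1 - q.1, p.2 - q.2).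
Definition Xscale (c : K) (p : X) : X := (c * p.1, c *: p.2).
Definition X0 : X := (0, 0).
Definition Xe : X := (1, 0).
Definition Xsum (s : seq X) : X := foldr Xadd X0 s.

Definition qop (p r : X) : X := (p.1 * r.1, r.1 *: p.2 + br p.2 r.2).
Definition T (p r s : X) : X := qop (qop p r) s.

(* Linear maps out of X^{(x)n} are represented by multilinear maps. *)
Definition Xlin (f : X -> X) : Prop :=
  forall c p q, f (Xadd (Xscale c p) q) = Xadd (Xscale c (f p)) (f q).
Definition Xtrilin (psi : X -> X -> X -> X) : Prop :=
  [/\ (forall v w, Xlin (fun u => psi u v w)),
      (forall u w, Xlin (fun v => psi u v w)) &
      (forall u v, Xlin (psi u v))].

(* Elements of X^{(x)3} are represented by finite sums of pure tensors
   (lists of triples); two such sums are equal in X^{(x)3} iff every linear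
   functional on X^{(x)3}, i.e. every trilinear form on X, agrees on them. *)
Definition lin_form (f : X -> K) : Prop :=
  forall c p q, f (Xadd (Xscale c p) q) = c * f p + f q.
Definition trilin_form (F : X -> X -> X -> K) : Prop :=
  [/\ (forall v w, lin_form (fun u => F u v w)),
      (forall u w, lin_form (fun v => F u v w)) &
      (forall u v, lin_form (F u v))].
Definition teq3 (s t : seq (X * X * X)) : Prop :=
  forall F, trilin_form F ->
    \sum_(e <- s) F e.1.1 e.1.2 e.2 = \sum_(e <- t) F e.1.1 e.1.2 e.2.

Definition Delta (p : X) : seq (X * X) := [:: (p, Xe); (Xe, (0, p.2))].
Definition Delta3 (p : X) : seq (X * X * X) :=
  flatten [seq [seq (d.1, d.2, t.2) | d <- Delta t.1] | t <- Delta p].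

Definition app3 (h : X -> X -> X -> X) (e : X * X * X) : X := h e.1.1 e.1.2 e.2.

(* sigma Delta_3^{(x)3}(u (x) v (x) w), as a list of triples (A1,A2,A3) with
   Ai = u^(i) (x) v^(i) (x) w^(i) *)
Definition sweep3 (u v w : X) : seq ((X * X * X) * (X * X * X) * (X * X * X)) :=
  flatten (flatten
    [seq [seq [seq ((du.1.1, dv.1.1, dw.1.1), (du.1.2, dv.1.2, dw.1.2),
                    (du.2, dv.2, dw.2)) | dw <- Delta3 w] | dv <- Delta3 v]
      | du <- Delta3 u]).

Definition TSD_C1 (f : X -> X) : Prop :=
  Xlin f /\
  forall p, teq3 (Delta3 (f p))
    (flatten [seq [:: (f e.1.1, e.1.2, e.2); (e.1.1, f e.1.2, e.2);
                      (e.1.1, e.1.2, f e.2)] | e <- Delta3 p]).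

Definition TSD_C2 (psi : X -> X -> X -> X) : Prop :=
  Xtrilin psi /\
  forall u v w, teq3 (Delta3 (psi u v w))
    (flatten [seq [:: (app3 psi a.1.1, app3 T a.1.2, app3 T a.2);
                      (app3 T a.1.1, app3 psi a.1.2, app3 T a.2);
                      (app3 T a.1.1, app3 T a.1.2, app3 psi a.2)]
             | a <- sweep3 u v w]).

Definition TSD_d1 (f : X -> X) (x y z : X) : X :=
  Xsub (Xsub (Xsub (f (T x y z)) (T (f x) y z)) (T x (f y) z)) (T x y (f z)).

Definition TSD_d2 (psi : X -> X -> X -> X) (x y z w u : X) : X :=
  Xsub (Xadd (T (psi x y z) w u) (psi (T x y z) w u))
    (Xsum (flatten [seq [seq
       let A1 := T x dw.1.1 du.1.1 in
       let A2 := T y dw.1.2 du.1.2 in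
       let A3 := T z dw.2 du.2 in
       let P1 := psi x dw.1.1 du.1.1 in
       let P2 := psi y dw.1.2 du.1.2 in
       let P3 := psi z dw.2 du.2 in
       Xadd (Xadd (Xadd (psi A1 A2 A3) (T P1 A2 A3)) (T A1 P2 A3)) (T A1 A2 P3)
     | du <- Delta3 u] | dw <- Delta3 w])).

Definition TSD_Z2 (psi : X -> X -> X -> X) : Prop :=
  TSD_C2 psi /\ (forall x y z w u, TSD_d2 psi x y z w u = X0).

Definition TSD_B2 (psi : X -> X -> X -> X) : Prop :=
  exists f, TSD_C1 f /\ (forall x y z, psi x y z = TSD_d1 f x y z).

Definition Theta2 (phi : g -> g -> g) (p r s : X) : X :=
  (0, r.1 *: phi p.2 s.2 + s.1 *: phi p.2 r.2 + br (phi p.2 r.2) s.2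
      + phi (br p.2 r.2) s.2).

End LieTSD.

(* Main.v *)
From HB Require Import structures.
From mathcomp Require Import all_boot all_order all_algebra.
From mathcomp Require Import ring.
Require Import Defs.
Set Implicit Arguments. Unset Strict Implicit. Unset Printing Implicit Defensive.
Import GRing.Theory.
Local Open Scope ring_scope.

Section SZ.
Variable K : fieldType.
Variable V : lmodType K.
Definition SZ : Type := (K * V)%type.
HB.instance Definition _ := GRing.Zmodule.on SZ.
Definition szmul (u v : SZ) : SZ := (u.1 * v.1, u.1 *: v.2 + v.1 *: u.2).
Definition szone : SZ := (1, 0).
Lemma szmulA : associative szmul.
Proof.
move=> [a x] [b y] [c z]; rewrite /szmul /=; congr pair; first by rewrite mulrA.
rewrite !scalerDr !scalerA addrA (mulrC c a) (mulrC c b); congr (_ + _).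
Qed.
Lemma szmulC : commutative szmul.
Proof. by move=> [a x] [b y]; rewrite /szmul /= mulrC addrC. Qed.
Lemma szmul1 : left_id szone szmul.
Proof. by move=> [a x]; rewrite /szmul /= mul1r scale1r scaler0 addr0. Qed.
Lemma szmulDl : left_distributive szmul +%R.
Proof.
move=> [a x] [b y] [c z]; rewrite /szmul /=; congr pair; first by rewrite mulrDl.
by rewrite scalerDl scalerDr !addrA; congr (_ + _); rewrite -!addrA; congr (_ + _); rewrite addrC.
Qed.
Lemma szone_neq0 : szone != 0.
Proof. by apply/eqP => -[] /eqP; rewrite oner_eq0. Qed.
HB.instance Definition _ := GRing.Zmodule_isComNzRing.Build SZ szmulA szmulC szmul1 szmulDl szone_neq0.
Definition inj (v : V) : SZ := (0, v).
Definition sc (k : K) : SZ := (k, 0).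
Lemma inj0 : inj 0 = 0. Proof. by []. Qed.
Lemma injD u v : inj (u + v) = inj u + inj v. Proof. transitivity ((0:K) + 0, u + v); first by rewrite addr0. exact: erefl. Qed.
Lemma injN u : inj (- u) = - inj u. Proof. by apply/eqP; rewrite -subr_eq0 opprK -injD addNr inj0. Qed.
Lemma injB u v : inj (u - v) = inj u - inj v. Proof. by rewrite injD injN. Qed.
Lemma injZ k v : inj (k *: v) = sc k * inj v.
Proof. transitivity (k * 0, k *: v + 0 *: 0); first by rewrite mulr0 scaler0 addr0. exact: erefl. Qed.
Lemma sc0 : sc 0 = 0. Proof. by []. Qed.
Lemma scD k l : sc (k + l) = sc k + sc l. Proof. transitivity (k + l, (0:V) + 0); first by rewrite addr0. exact: erefl. Qed.
Lemma scM k l : sc (k * l) = sc k * sc l.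
Proof. transitivity (k * l, k *: (0:V) + l *: 0); first by rewrite !scaler0 addr0. exact: erefl. Qed.
Lemma scN k : sc (- k) = - sc k. Proof. by apply/eqP; rewrite -subr_eq0 opprK -scD addNr sc0. Qed.
Lemma scB k l : sc (k - l) = sc k - sc l. Proof. by rewrite scD scN. Qed.
Lemma sc1 : sc 1 = 1. Proof. by []. Qed.
Lemma inj_inj : injective inj. Proof. by move=> u v []. Qed.
End SZ.

Definition szE := (injD, injN, injB, inj0, injZ, scD, scM, scN, scB, sc0, sc1).


Section Lin.
Variable K : fieldType.
Variable g : lmodType K.

Section L1.
Variable f : g -> g.
Hypothesis lf : linear_map f.
Lemma lin0 : f 0 = 0.
Proof.
have h : f 0 + f 0 = f 0 + 0 by rewrite addr0 -{1}(scale1r (f 0)) -lf scale1r addr0.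
exact: addrI h.
Qed.
Lemma linD u v : f (u + v) = f u + f v.
Proof. by rewrite -[u in LHS]scale1r lf scale1r. Qed.
Lemma linZ k u : f (k *: u) = k *: f u.
Proof. by rewrite -[_ *: u]addr0 lf lin0 addr0. Qed.
Lemma linN u : f (- u) = - f u.
Proof. by rewrite -scaleN1r linZ scaleN1r. Qed.
Lemma linB u v : f (u - v) = f u - f v.
Proof. by rewrite linD linN. Qed.
End L1.
End Lin.

Section Bil.
Variable K : fieldType.
Variable g : lmodType K.
Variable B : g -> g -> g.
Hypothesis HB : bilinear_map B.
Lemma B0l z : B 0 z = 0. Proof. exact: (lin0 (HB.1 z)). Qed.
Lemma BDl u v z : B (u + v) z = B u z + B v z. Proof. exact: (linD (HB.1 z)). Qed.
Lemma BZl k u z : B (k *: u) z = k *: B u z. Proof. exact: (linZ (HB.1 z)). Qed.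
Lemma BNl u z : B (- u) z = - B u z. Proof. exact: (linN (HB.1 z)). Qed.
Lemma BBl u v z : B (u - v) z = B u z - B v z. Proof. exact: (linB (HB.1 z)). Qed.
Lemma B0r z : B z 0 = 0. Proof. exact: (lin0 (HB.2 z)). Qed.
Lemma BDr u v z : B z (u + v) = B z u + B z v. Proof. exact: (linD (HB.2 z)). Qed.
Lemma BZr k u z : B z (k *: u) = k *: B z u. Proof. exact: (linZ (HB.2 z)). Qed.
Lemma BNr u z : B z (- u) = - B z u. Proof. exact: (linN (HB.2 z)). Qed.
Lemma BBr u v z : B z (u - v) = B z u - B z v. Proof. exact: (linB (HB.2 z)). Qed.
End Bil.

Section Part3.
Variable K : fieldType.
Variable g : lmodType K.
Variable br : g -> g -> g.
Hypothesis brB : bilinear_map br.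
Definition brE := (B0l brB, B0r brB, BDl brB, BDr brB, BZl brB, BZr brB, BNl brB, BNr brB, BBl brB, BBr brB).

Lemma part3 (c : K) (phi phi' : g -> g -> g) (p r s : X g) :
  Theta2 br (fun x y => c *: phi x y + phi' x y) p r s
  = Xadd (Xscale c (Theta2 br phi p r s)) (Theta2 br phi' p r s).
Proof.
case: p r s => [a x] [b y] [d z]; rewrite /Theta2 /Xadd /Xscale /=; congr pair.
  by rewrite mulr0 addr0.
apply: (@inj_inj _ g); rewrite !brE !szE; ring.
Qed.
End Part3.

Section Coord.
Variable K : fieldType.
Variable g : lmodType K.
Local Notation E := (@Xe K g).
Local Notation X0 := (@X0 K g).
Implicit Types (F : X g -> X g -> X g -> K) (p q r : X g).

Definition Fc F p q r : K :=
  p.1 * q.1 * r.1 * F E E E + p.1 * q.1 * F E E (0, r.2)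
  + p.1 * r.1 * F E (0, q.2) E + p.1 * F E (0, q.2) (0, r.2)
  + q.1 * r.1 * F (0, p.2) E E + q.1 * F (0, p.2) E (0, r.2)
  + r.1 * F (0, p.2) (0, q.2) E + F (0, p.2) (0, q.2) (0, r.2).

Lemma lf_dec (f : X g -> K) : lin_form f -> forall p, f p = p.1 * f E + f (0, p.2).
Proof.
move=> lf [a x]; rewrite -lf /=; congr f; rewrite /Xadd /Xscale /=.
by rewrite mulr1 addr0 scaler0 add0r.
Qed.

Lemma lf0 (f : X g -> K) : lin_form f -> f X0 = 0.
Proof.
move=> lf; have h : f X0 + f X0 = f X0 + 0.
  rewrite addr0 -{1}(mul1r (f X0)) -lf; congr f.
  by rewrite /Xadd /Xscale /X0 /= mulr0 !addr0 scaler0.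
exact: addrI h.
Qed.
Lemma lfD (f : X g -> K) : lin_form f -> forall a b, f (0, a + b) = f (0, a) + f (0, b).
Proof.
move=> lf a b; rewrite -[f (0, a)]mul1r -lf; congr f.
by rewrite /Xadd /Xscale /= mulr0 addr0 scale1r.
Qed.
Lemma lfZ (f : X g -> K) : lin_form f -> forall k a, f (0, k *: a) = k * f (0, a).
Proof.
move=> lf k a; have := lf k (0, a) X0; rewrite (lf0 lf) addr0 => <-; congr f.
by rewrite /Xadd /Xscale /= mulr0 !addr0.
Qed.
Lemma lfZ0 (f : X g -> K) : lin_form f -> f (0, 0) = 0.
Proof. by move=> lf; apply: lf0. Qed.
Lemma lfN (f : X g -> K) : lin_form f -> forall a, f (0, - a) = - f (0, a).
Proof. by move=> lf a; rewrite -scaleN1r (lfZ lf) mulN1r. Qed.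
Lemma lfB (f : X g -> K) : lin_form f -> forall a b, f (0, a - b) = f (0, a) - f (0, b).
Proof. by move=> lf a b; rewrite (lfD lf) (lfN lf). Qed.

Variable F : X g -> X g -> X g -> K.
Hypothesis HF : trilin_form F.
Lemma Fexp p q r : F p q r = Fc F p q r.
Proof.
case: HF => H1 H2 H3; rewrite /Fc.
rewrite (lf_dec (H1 q r) p) (lf_dec (H2 E r) q) (lf_dec (H2 (0, p.2) r) q).
rewrite (lf_dec (H3 E E) r) (lf_dec (H3 E (0, q.2)) r) (lf_dec (H3 (0, p.2) E) r).
rewrite (lf_dec (H3 (0, p.2) (0, q.2)) r) /=; ring.
Qed.
Lemma F1D a b q r : F (0, a + b) q r = F (0, a) q r + F (0, b) q r.
Proof. by case: HF => H1 _ _; apply: (lfD (H1 q r)). Qed.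
Lemma F1Z k a q r : F (0, k *: a) q r = k * F (0, a) q r.
Proof. by case: HF => H1 _ _; apply: (lfZ (H1 q r)). Qed.
Lemma F1N a q r : F (0, - a) q r = - F (0, a) q r.
Proof. by case: HF => H1 _ _; apply: (lfN (H1 q r)). Qed.
Lemma F1B a b q r : F (0, a - b) q r = F (0, a) q r - F (0, b) q r.
Proof. by case: HF => H1 _ _; apply: (lfB (H1 q r)). Qed.
Lemma F10 q r : F (0, 0) q r = 0.
Proof. by case: HF => H1 _ _; apply: (lfZ0 (H1 q r)). Qed.
Lemma F2D a b q r : F q (0, a + b) r = F q (0, a) r + F q (0, b) r.
Proof. by case: HF => _ H2 _; apply: (lfD (H2 q r)). Qed.
Lemma F2Z k a q r : F q (0, k *: a) r = k * F q (0, a) r.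
Proof. by case: HF => _ H2 _; apply: (lfZ (H2 q r)). Qed.
Lemma F2N a q r : F q (0, - a) r = - F q (0, a) r.
Proof. by case: HF => _ H2 _; apply: (lfN (H2 q r)). Qed.
Lemma F2B a b q r : F q (0, a - b) r = F q (0, a) r - F q (0, b) r.
Proof. by case: HF => _ H2 _; apply: (lfB (H2 q r)). Qed.
Lemma F20 q r : F q (0, 0) r = 0.
Proof. by case: HF => _ H2 _; apply: (lfZ0 (H2 q r)). Qed.
Lemma F3D a b q r : F q r (0, a + b) = F q r (0, a) + F q r (0, b).
Proof. by case: HF => _ _ H3; apply: (lfD (H3 q r)). Qed.
Lemma F3Z k a q r : F q r (0, k *: a) = k * F q r (0, a).
Proof. by case: HF => _ _ H3; apply: (lfZ (H3 q r)). Qed.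
Lemma F3N a q r : F q r (0, - a) = - F q r (0, a).
Proof. by case: HF => _ _ H3; apply: (lfN (H3 q r)). Qed.
Lemma F3B a b q r : F q r (0, a - b) = F q r (0, a) - F q r (0, b).
Proof. by case: HF => _ _ H3; apply: (lfB (H3 q r)). Qed.
Lemma F30 q r : F q r (0, 0) = 0.
Proof. by case: HF => _ _ H3; apply: (lfZ0 (H3 q r)). Qed.
End Coord.

Lemma teq3_coord (K : fieldType) (g : lmodType K) (s t : seq (X g * X g * X g)) :
  (forall F, trilin_form F ->
     \sum_(e <- s) Fc F e.1.1 e.1.2 e.2 = \sum_(e <- t) Fc F e.1.1 e.1.2 e.2) ->
  teq3 s t.
Proof.
move=> h F HF; rewrite (eq_bigr (fun e => Fc F e.1.1 e.1.2 e.2)); last by move=> e _; rewrite Fexp.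
by rewrite h // [RHS](eq_bigr (fun e => Fc F e.1.1 e.1.2 e.2)) // => e _; rewrite Fexp.
Qed.

Section FX.
Variable K : fieldType.
Variable g : lmodType K.
Variable F : X g -> X g -> X g -> K.
Hypothesis HF : trilin_form F.
Lemma FX1 q r : F (@X0 K g) q r = 0. Proof. by case: HF => H _ _; exact: (lf0 (H _ _)). Qed.
Lemma FX2 q r : F q (@X0 K g) r = 0. Proof. by case: HF => _ H _; exact: (lf0 (H _ _)). Qed.
Lemma FX3 q r : F q r (@X0 K g) = 0. Proof. by case: HF => _ _ H; exact: (lf0 (H _ _)). Qed.
End FX.

Section FZ.
Variable K : fieldType.
Variable g : lmodType K.
Variable F : X g -> X g -> X g -> K.
Hypothesis HF : trilin_form F.
Lemma XaddX0 (p : X g) : Xadd p (@X0 K g) = p.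
Proof. by case: p => a x; rewrite /Xadd /= !addr0. Qed.
Lemma FZ1 k p q r : F (Xscale k p) q r = k * F p q r.
Proof. by case: HF => H _ _; rewrite -[Xscale k p]XaddX0 H (FX1 HF) addr0. Qed.
Lemma FZ2 k p q r : F q (Xscale k p) r = k * F q p r.
Proof. by case: HF => _ H _; rewrite -[Xscale k p]XaddX0 H (FX2 HF) addr0. Qed.
Lemma FZ3 k p q r : F q r (Xscale k p) = k * F q r p.
Proof. by case: HF => _ _ H; rewrite -[Xscale k p]XaddX0 H (FX3 HF) addr0. Qed.
End FZ.

Section Part2.
Variable K : fieldType.
Variable g : lmodType K.
Variable br : g -> g -> g.
Hypothesis brB : bilinear_map br.
Local Notation E := (@Xe K g).

Lemma part2 phi : lie_B2 br phi -> TSD_B2 br (Theta2 br phi).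
Proof.
case=> f [lf hf]; exists (fun p => (0, f p.2)); split; first split.
- move=> c [a x] [b y]; rewrite /Xadd /Xscale /=; congr pair; first by rewrite mulr0 addr0.
  by rewrite (linD lf) (linZ lf).
- move=> [a x]; apply: teq3_coord => F HF.
  rewrite /Delta3 /Delta /= !big_cons !big_nil /Fc /=.
  rewrite (lin0 lf).
  rewrite ?(F1D HF, F1Z HF, F1N HF, F1B HF, F10 HF, F2D HF, F2Z HF, F2N HF, F2B HF, F20 HF, F3D HF, F3Z HF, F3N HF, F3B HF, F30 HF).
  ring.
- move=> [a x] [b y] [c z]; rewrite /Theta2 /TSD_d1 /Xsub /T /qop /=; congr pair; first by ring.
  rewrite !hf /lie_d1.
  apply: (@inj_inj _ g); rewrite !(brE brB) !(linD lf, linZ lf, linN lf, linB lf, lin0 lf) !szE; ring.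
Qed.
End Part2.

Lemma sum_foldr (R : nmodType) (T : Type) (h : T -> R) (s : seq T) :
  \sum_(e <- s) h e = foldr (fun e acc => h e + acc) 0 s.
Proof. by elim: s => [|x s IH]; rewrite ?big_nil ?big_cons ?IH. Qed.

Section P1a.
Variable K : fieldType.
Variable g : lmodType K.
Variable br : g -> g -> g.
Hypothesis brB : bilinear_map br.
Variable phi : g -> g -> g.
Hypothesis phB : bilinear_map phi.
Local Notation E := (@Xe K g).
Local Notation X0 := (@X0 K g).
Ltac expand := do 5 rewrite ?(brE brB) ?(brE phB).
Ltac pairs := rewrite /T /qop /Theta2 /X0 /Xscale /=; congr pair; rewrite ?(mulr0, mul0r, mulr1, mul1r); expand; rewrite ?(scale0r, scaler0, scale1r, addr0, add0r) //.
Lemma T00 q r : T br (0, 0) q r = X0. Proof. pairs. Qed.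
Lemma T01 p r : T br p (0, 0) r = X0. Proof. pairs. Qed.
Lemma T02 p q : T br p q (0, 0) = X0. Proof. pairs. Qed.
Lemma TE0 y r : T br E (0, y) r = X0. Proof. pairs. Qed.
Lemma TE2 q z : T br E q (0, z) = X0. Proof. pairs. Qed.
Lemma Th00 q r : Theta2 br phi (0, 0) q r = X0. Proof. pairs. Qed.
Lemma Th01 p r : Theta2 br phi p (0, 0) r = X0. Proof. pairs. Qed.
Lemma Th02 p q : Theta2 br phi p q (0, 0) = X0. Proof. pairs. Qed.
Lemma ThE q r : Theta2 br phi E q r = X0. Proof. pairs. Qed.
Lemma ThEE p : Theta2 br phi p E E = X0. Proof. pairs. Qed.
Lemma TpEE pp : T br pp E E = pp. Proof. case: pp => ? ?; pairs. Qed.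
Lemma TX1 q r : T br X0 q r = X0. Proof. pairs. Qed.
Lemma TX2 pp r : T br pp X0 r = X0. Proof. pairs. Qed.
Lemma TX3 pp q : T br pp q X0 = X0. Proof. pairs. Qed.
Lemma ThX1 q r : Theta2 br phi X0 q r = X0. Proof. pairs. Qed.
Lemma ThX2 pp r : Theta2 br phi pp X0 r = X0. Proof. pairs. Qed.
Lemma ThX3 pp q : Theta2 br phi pp q X0 = X0. Proof. pairs. Qed.
Lemma XaddX0l pp : Xadd X0 pp = pp. Proof. by case: pp => ? ?; rewrite /Xadd /= !add0r. Qed.
Lemma XaddX0r pp : Xadd pp X0 = pp. Proof. by case: pp => ? ?; rewrite /Xadd /= !addr0. Qed.
Lemma Tpair a x b y c z : T br (a, x) (b, y) (c, z) = (a * b * c, (b * c) *: x + c *: br x y + b *: br x z + br (br x y) z).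
Proof. rewrite /T /qop /=; congr pair; apply: (@inj_inj _ g); expand; rewrite !szE; ring. Qed.
Lemma TppE a x b y : T br (a, x) (b, y) E = (a * b, b *: x + br x y). Proof. pairs. Qed.
Lemma TpEp a x c z : T br (a, x) E (c, z) = (a * c, c *: x + br x z). Proof. pairs. Qed.
Lemma ThppE a x b y : Theta2 br phi (a, x) (b, y) E = (0, phi x y). Proof. pairs. Qed.
Lemma ThpEp a x c z : Theta2 br phi (a, x) E (c, z) = (0, phi x z). Proof. pairs. Qed.
Lemma Thpair a x b y c z : Theta2 br phi (a, x) (b, y) (c, z) = (0, b *: phi x z + c *: phi x y + br (phi x y) z + phi (br x y) z).
Proof. by []. Qed.
Lemma TEEE : T br E E E = E. Proof. pairs. Qed.
Lemma TEb b y : T br E (b, y) E = Xscale b E. Proof. pairs. Qed.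
Lemma TEc c z : T br E E (c, z) = Xscale c E. Proof. pairs. Qed.
Lemma Thx0z x z : Theta2 br phi (0, x) E (0, z) = (0, phi x z). Proof. pairs. Qed.
Lemma Thxy0 x y : Theta2 br phi (0, x) (0, y) E = (0, phi x y). Proof. pairs. Qed.
Lemma Thxyz x y z : Theta2 br phi (0, x) (0, y) (0, z) = (0, br (phi x y) z + phi (br x y) z). Proof. pairs. Qed.


Lemma theta_trilin : Xtrilin (Theta2 br phi).
Proof.
split=> [v w|u w|u v] c [a x] [b y]; rewrite /Theta2 /Xadd /Xscale /=; congr pair;
  try by rewrite mulr0 addr0.
all: apply: (@inj_inj _ g); do 3 rewrite ?(brE brB) ?(brE phB); rewrite !szE; ring.
Qed.

Lemma theta_C2 u v w : teq3 (Delta3 (Theta2 br phi u v w))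
    (flatten [seq [:: (app3 (Theta2 br phi) a.1.1, app3 (T br) a.1.2, app3 (T br) a.2);
                      (app3 (T br) a.1.1, app3 (Theta2 br phi) a.1.2, app3 (T br) a.2);
                      (app3 (T br) a.1.1, app3 (T br) a.1.2, app3 (Theta2 br phi) a.2)]
             | a <- sweep3 u v w]).
Proof.
case: u v w => [a x] [b y] [c z] F HF.
rewrite /sweep3 /Delta3 /Delta /app3 !sum_foldr /=.
rewrite ?(T00, T01, T02, TE0, TE2, Th00, Th01, Th02, ThE, ThEE).
rewrite ?(FX1 HF, FX2 HF, FX3 HF) ?addr0 ?add0r.
rewrite ?(TEEE, TEb, TEc, Thx0z, Thxy0, Thxyz) ?(FZ1 HF, FZ2 HF, FZ3 HF).
rewrite ?(F1D HF, F1Z HF, F2D HF, F2Z HF, F3D HF, F3Z HF).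
ring.
Qed.

Definition jacE a b c := br a (br b c) + br b (br c a) + br c (br a b).
Definition cocE := lie_d2 br phi.
Definition brS a b := br a b + br b a.
Definition phS a b := phi a b + phi b a.
Hypothesis jac : forall a b c, jacE a b c = 0.
Hypothesis coc : forall a b c, cocE a b c = 0.
Hypothesis bralt : forall a, br a a = 0.
Hypothesis phalt : forall a, phi a a = 0.
Lemma brS0 a b : brS a b = 0.
Proof. move: (bralt (a + b)); rewrite !(brE brB) !bralt add0r addr0 => hh; by rewrite /brS. Qed.
Lemma phS0 a b : phS a b = 0.
Proof. move: (phalt (a + b)); rewrite !(brE phB) !phalt add0r addr0 => hh; by rewrite /phS. Qed.

Lemma brC a b : br a b = - br b a.
Proof. by apply/eqP; rewrite -addr_eq0; apply/eqP; apply: brS0. Qed.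
Lemma phiC a b : phi a b = - phi b a.
Proof. by apply/eqP; rewrite -addr_eq0; apply/eqP; apply: phS0. Qed.

Lemma theta_d2 x y z w u : TSD_d2 br (Theta2 br phi) x y z w u = X0.
Proof.
case: x y z w u => [a x] [b y] [c z] [d p] [h q].
rewrite /TSD_d2 /Delta3 /Delta /=.
rewrite ?(T00, T01, T02, Th00, Th01, Th02, TpEE, ThEE).
rewrite ?(TX1, TX2, TX3, ThX1, ThX2, ThX3, XaddX0l, XaddX0r).
rewrite !(TppE, TpEp, ThppE, ThpEp).
rewrite !(Tpair, Thpair).
rewrite /Xsub /Xadd /=.
congr pair.
  ring.
apply: (@inj_inj _ g).
rewrite inj0.
have hz : inj (
    (1) *: (br (q) (jacE (p) ((phi x y)) (z)))
  + (- (1)) *: (jacE ((- (br (phi x y) p))) (q) (z))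
  + (1) *: (jacE ((- (br z p))) (q) ((phi x y)))
  + (1) *: (br (z) (br (q) (cocE (p) (x) (y))))
  + (- (1)) *: (br (z) (jacE ((- (phi y p))) (q) (x)))
  + (1) *: (br (z) (jacE ((- (phi x p))) (q) (y)))
  + (1) *: (br (z) (cocE ((- (br y p))) (q) (x)))
  + (- (1)) *: (br (z) (cocE ((- (br x p))) (q) (y)))
  + (- (1)) *: (br (z) (phi (q) (jacE (p) (x) (y))))
  + (- (1)) *: (br (q) (cocE (p) ((br x y)) (z)))
  + (- (1)) *: (jacE ((- (phi (br x y) p))) (q) (z))
  + (1) *: (jacE ((- (phi z p))) (q) ((br x y)))
  + (1) *: (cocE ((- (br (br x y) p))) (q) (z))
  + (- (1)) *: (cocE ((- (br z p))) (q) ((br x y)))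
  + (- (1)) *: (br ((- (phi z p))) (jacE (q) (x) (y)))
  + (1) *: (phi (q) (jacE (p) ((br x y)) (z)))
  + (- (1)) *: (phi (z) (br (q) (jacE (p) (x) (y))))
  + (- (1)) *: (phi (z) (jacE ((- (br y p))) (q) (x)))
  + (1) *: (phi (z) (jacE ((- (br x p))) (q) (y)))
  + (- (1)) *: (phi ((- (br z p))) (jacE (q) (x) (y)))
  + (- (1)) *: (br ((- (phi z q))) (jacE (p) (x) (y)))
  + (1) *: (br ((- (br z q))) (cocE (p) (x) (y)))
  + (1) *: (br ((- (br z p))) (cocE (q) (x) (y)))
  + (- (1)) *: (phi ((- (br z q))) (jacE (p) (x) (y)))
  + (- (b)) *: (br (q) (cocE (p) (x) (z)))
  + (b) *: (jacE ((- (phi z p))) (q) (x))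
  + (- (b)) *: (jacE ((- (phi x p))) (q) (z))
  + (- (b)) *: (cocE ((- (br z p))) (q) (x))
  + (b) *: (cocE ((- (br x p))) (q) (z))
  + (b) *: (phi (q) (jacE (p) (x) (z)))
  + (b * d) *: (cocE (q) (x) (z))
  + (b * h) *: (cocE (p) (x) (z))
  + (- (c)) *: (br (q) (cocE (p) (x) (y)))
  + (c) *: (jacE ((- (phi y p))) (q) (x))
  + (- (c)) *: (jacE ((- (phi x p))) (q) (y))
  + (- (c)) *: (cocE ((- (br y p))) (q) (x))
  + (c) *: (cocE ((- (br x p))) (q) (y))
  + (c) *: (phi (q) (jacE (p) (x) (y)))
  + (c * d) *: (cocE (q) (x) (y))
  + (c * h) *: (cocE (p) (x) (y))
  + (- (d)) *: (br (z) (cocE (q) (x) (y)))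
  + (- (d)) *: (jacE (q) ((phi x y)) (z))
  + (d) *: (cocE (q) ((br x y)) (z))
  + (d) *: (phi (z) (jacE (q) (x) (y)))
  + (- (h)) *: (br (z) (cocE (p) (x) (y)))
  + (- (h)) *: (jacE (p) ((phi x y)) (z))
  + (h) *: (cocE (p) ((br x y)) (z))
  + (h) *: (phi (z) (jacE (p) (x) (y)))) = 0.
  rewrite ?(jac, coc, brS0, phS0); do 6 rewrite ?(B0l brB, B0r brB, B0l phB, B0r phB); rewrite ?(scaler0, addr0) inj0 //.
apply: (etrans _ hz).
rewrite /jacE /cocE /lie_d2 /brS /phS.
expand.
rewrite ?(brC p x) ?(brC q x) ?(brC q y) ?(brC q z) ?(phiC p x) ?(phiC q x) ?(phiC q y) ?(phiC q z); rewrite ?(BNl brB, BNr brB, BNl phB, BNr phB).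
rewrite ?(brC p (br x y)) ?(brC p (br x z)) ?(brC p (phi x y)) ?(brC q (phi x y)) ?(brC y (br x p)) ?(brC y (br x q)) ?(brC y (phi x p)) ?(brC z (phi x p)) ?(brC (br y p) (br x q)) ?(brC (phi y p) x) ?(brC (phi y p) (br x q)) ?(brC (phi y q) x) ?(brC (phi y q) (br x p)) ?(brC (phi z p) x) ?(brC (phi z p) (br x q)) ?(brC (phi z p) (br x y)) ?(brC (phi z q) x) ?(brC (phi z q) (br x p)) ?(brC (phi z q) (br x y)) ?(phiC p (br x y)) ?(phiC q (br x y)) ?(phiC y (br x p)) ?(phiC z (br x p)) ?(phiC (br y p) x) ?(phiC (br y q) x) ?(phiC (br y q) (br x p)) ?(phiC (br z p) x) ?(phiC (br z p) (br x y)) ?(phiC (br z q) x) ?(phiC (br z q) (br x p)) ?(phiC (br z q) (br x y)); rewrite ?(BNl brB, BNr brB, BNl phB, BNr phB).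
rewrite ?(brC p (br (br x y) z)) ?(brC p (br (phi x y) z)) ?(brC q (br (phi x y) p)) ?(brC q (br (phi x y) z)) ?(brC q (br (phi x z) p)) ?(brC q (phi (br x y) p)) ?(brC q (phi (br x z) p)) ?(brC y (br (br x p) q)) ?(brC y (br (phi x p) q)) ?(brC z (br x (phi y p))) ?(brC z (br x (phi y q))) ?(brC z (br (br x p) (phi y q))) ?(brC z (br (br x q) (phi y p))) ?(brC z (br (phi x p) q)) ?(brC z (br (phi x p) y)) ?(brC z (br (phi x p) (br y q))) ?(brC z (br (phi x q) y)) ?(brC z (br (phi x q) (br y p))) ?(brC z (phi x (br y p))) ?(brC z (phi x (br y q))) ?(brC z (phi (br x p) y)) ?(brC z (phi (br x p) (br y q))) ?(brC z (phi (br x q) y)) ?(brC z (phi (br x q) (br y p))) ?(brC (br z p) (br x (phi y q))) ?(brC (br z p) (br (phi x q) y)) ?(brC (br z p) (phi x (br y q))) ?(brC (br z p) (phi (br x q) y)) ?(brC (br z q) (br x (phi y p))) ?(brC (br z q) (br (phi x p) y)) ?(brC (br z q) (phi x (br y p))) ?(brC (br z q) (phi (br x p) y)) ?(brC (br (br x y) p) q) ?(brC (br (phi x y) p) (br z q)) ?(brC (phi x (br y p)) q) ?(brC (phi x (br z p)) q) ?(brC (phi z p) (br q (br x y))) ?(brC (phi z p) (br x (br y q))) ?(brC (phi z p) (br (br x q) y)) ?(brC (phi z q) (br x (br y p))) ?(brC (phi z q) (br (br x p) y)) ?(brC (phi z q) (br (br x y) p)) ?(brC (phi (br x p) y) q)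 ?(brC (phi (br x p) z) q) ?(brC (phi (br x y) p) z) ?(brC (phi (br x y) p) (br z q)) ?(brC (phi (br x y) q) z) ?(brC (phi (br x y) q) (br z p)) ?(brC (phi (br x y) (br z p)) q) ?(brC (phi (br y p) q) x) ?(brC (phi (br z p) q) x) ?(brC (phi (br z p) q) (br x y)) ?(phiC q (br (br x y) p)) ?(phiC q (br (br x z) p)) ?(phiC z (br x (br y p))) ?(phiC z (br x (br y q))) ?(phiC z (br (br x p) y)) ?(phiC z (br (br x p) (br y q))) ?(phiC z (br (br x q) y)) ?(phiC z (br (br x q) (br y p))) ?(phiC (br q (br x y)) z) ?(phiC (br x (br y p)) q) ?(phiC (br x (br z p)) q) ?(phiC (br z p) (br q (br x y))) ?(phiC (br z p) (br x (br y q))) ?(phiC (br z p) (br (br x q) y)) ?(phiC (br z q) (br x (br y p))) ?(phiC (br z q) (br (br x p) y)) ?(phiC (br z (br x p)) q) ?(phiC (br (br x p) y) q) ?(phiC (br (br x y) p) z) ?(phiC (br (br x y) (br z p)) q) ?(phiC (br (br y p) q) x) ?(phiC (br (br z p) q) x) ?(phiC (br (br z p) q) (br x y)); rewrite ?(BNl brB, BNr brB, BNl phB, BNr phB).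
rewrite ?(brC q (br (br (phi x y) z) p)) ?(brC q (br (phi (br x y) z) p)) ?(brC q (phi (br (br x y) z) p)) ?(brC z (br x (br (phi y p) q))) ?(brC z (br x (phi (br y p) q))) ?(brC z (br (br (phi x p) q) y)) ?(brC z (br (phi (br x p) q) y)) ?(brC z (phi x (br (br y p) q))) ?(brC z (phi (br (br x p) q) y)) ?(brC (phi z (br (br x y) p)) q) ?(brC (phi (br (br x y) p) q) z) ?(phiC q (br (br (br x y) z) p)) ?(phiC z (br x (br (br y p) q))) ?(phiC z (br (br (br x p) q) y)) ?(phiC (br q (br (br x y) p)) z) ?(phiC (br z (br (br x y) p)) q); rewrite ?(BNl brB, BNr brB, BNl phB, BNr phB).
rewrite !szE.
ring.
Qed.
End P1a.

Theorem mainTheorem7 (K : fieldType) (g : lmodType K) (br : g -> g -> g) :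
  is_lie_bracket br ->
  [/\ (forall phi, lie_Z2 br phi -> TSD_Z2 br (Theta2 br phi)),
      (forall phi, lie_B2 br phi -> TSD_B2 br (Theta2 br phi)) &
      (forall (c : K) (phi phi' : g -> g -> g) (p r s : X g),
         Theta2 br (fun x y => c *: phi x y + phi' x y) p r s
         = Xadd (Xscale c (Theta2 br phi p r s)) (Theta2 br phi' p r s))].
Proof.
case=> brB bralt jacH; split.
- move=> phi [[phB phalt] cocH]; split; first split.
  + exact: theta_trilin.
  + move=> u v w; exact: theta_C2.
  + move=> x y z w u; exact: (theta_d2 brB phB jacH cocH bralt phalt).
- exact: part2.
- exact: part3.
Qed.
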